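(* Let $k \ge 2$. For any $n, m \in \mathbb{N}$ with $1 \le m \le n$, we have $n - o_n(m) = \mathcal{G}(nk - m)$.
   Context: Josephus problem: the numbers $1,2,\dots,n$ are arranged in a circle; starting the count at $1$, every $k$-th number still present is removed (counting resumes with the next remaining number after each removal) until one number remains. For $1 \le m \le n$, $o_n(m)=i$ if $m$ is the $i$-th number removed ($1 \le i \le n-1$), and $o_n(m)=n$ if $m$ is the number that remains. Maximum Nim with rule function $f(x)=\lfloor x/k\rfloor$: a position is a pile of $x \ge 0$ stones, and from $x$ one may move to $x-u$ for any integer $u$ with $1 \le u \le \lfloor x/k \rfloor$. The Grundy number is defined recursively by $\mathcal{G}(x) = \mathrm{mex}\{\mathcal{G}(x-u) : 1 \le u \le \lfloor x/k\rfloor\}$, where $\mathrm{mex}(S)$ is the least non-negative integer not in $S$ (so $\mathcal{G}(x)=0$ when $\lfloor x/k\rfloor = 0$). *)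

(* Defs.v *)
From mathcomp Require Import all_boot.
Set Implicit Arguments. Unset Strict Implicit. Unset Printing Implicit Defensive.

(* [jos_run k fuel s p] : the circle is the list [s] (in circular order),
   counting starts (with "1") at index [p] of [s].  The k-th number still
   present, at index (p + k - 1) mod |s|, is removed; counting resumes with
   the next remaining number, which sits at that same index in the shortened
   list (taken mod its size at the next step).  Returns the removal order;
   the last element of the result is the number that remains. *)
Fixpoint jos_run (k fuel : nat) (s : seq nat) (p : nat) : seq nat :=
  match fuel with
  | 0 => [::]
  | f.+1 =>
      if s is [::] then [::] else
      let i := (p + k.-1) %% size s in
      nth 0 s i :: jos_run k f (take i s ++ drop i.+1 s) i
  end.

(* the full elimination order of 1..n, starting the count at 1;
   its i-th entry (1-based, i <= n-1) is the i-th removed number and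
   its n-th entry is the survivor *)
Definition jos_order (k n : nat) : seq nat := jos_run k n (iota 1 n) 0.

Definition jos_o (k n m : nat) : nat := (index m (jos_order k n)).+1.

Definition mex (s : seq nat) : nat := find (fun j => j \notin s) (iota 0 (size s).+1).

Fixpoint grundy_aux (k fuel x : nat) : nat :=
  match fuel with
  | 0 => 0
  | f.+1 => mex [seq grundy_aux k f (x - u) | u <- iota 1 (x %/ k)]
  end.

Definition grundy (k x : nat) : nat := grundy_aux k x.+1 x.

(* Main.v *)
Require Import Defs.
From mathcomp Require Import all_boot zify.

Lemma mexP s v : v \notin s -> (forall w, w < v -> w \in s) -> mex s = v.
Proof.
move=> hv hw.
have vs : v <= size s.
  have := @uniq_leq_size _ (iota 0 v) s (iota_uniq 0 v).
  rewrite size_iota; apply => w; rewrite mem_iota => /andP[_ ]; rewrite add0n; exact: hw.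
rewrite /mex; set l := iota 0 (size s).+1; set f := find _ l.
have hvl : v < (size s).+1 by [].
have hhas : has (fun j => j \notin s) l.
  by apply/hasP; exists v => //; rewrite mem_iota; lia.
have hf : f < (size s).+1 by move: hhas; rewrite has_find size_iota.
have := nth_find 0 hhas; rewrite -/f (nth_iota _ _ hf) add0n => hfs.
apply/eqP; rewrite eqn_leq; apply/andP; split.
  rewrite leqNgt; apply/negP => lt.
  have := before_find 0 lt; rewrite (nth_iota _ _ hvl) add0n /= hv //.
rewrite leqNgt; apply/negP => lt; by rewrite hw in hfs.
Qed.

Lemma gaux_eq k f1 f2 x : x < f1 -> x < f2 -> grundy_aux k f1 x = grundy_aux k f2 x.
Proof.
elim: f1 f2 x => [//|f1 IH] [//|f2] x h1 h2 /=.
congr mex; apply eq_in_map => u; rewrite mem_iota => /andP[u1 u2].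
have := leq_div x k; move=> hd.
apply IH; lia.
Qed.

Lemma grundyE k x : grundy k x = mex [seq grundy k (x - u) | u <- iota 1 (x %/ k)].
Proof.
change (grundy k x) with (grundy_aux k x.+1 x); rewrite [grundy_aux k x.+1 x]/=.
congr mex; apply eq_in_map => u; rewrite mem_iota => /andP[u1 u2].
have := leq_div x k; move=> hd.
rewrite /grundy; apply gaux_eq; lia.
Qed.

Lemma memM k x w : w \in [seq grundy k (x - u) | u <- iota 1 (x %/ k)] <->
  exists y, x - x %/ k <= y < x /\ grundy k y = w.
Proof.
have := leq_div x k; move=> hd.
split.
  move/mapP=> [u]; rewrite mem_iota => /andP[u1 u2] ->; exists (x - u); split=> //; lia.
move=> [y [/andP[y1 y2] <-]]; apply/mapP; exists (x - y); first by rewrite mem_iota; lia.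
congr grundy; lia.
Qed.

Definition Inv k x :=
  [/\ (forall y, x - x %/ k <= y <= x -> grundy k y <= x %/ k),
      (forall v, v <= x %/ k -> exists y, x - x %/ k <= y <= x /\ grundy k y = v) &
      (forall y1 y2, x - x %/ k <= y1 <= x -> x - x %/ k <= y2 <= x ->
          grundy k y1 = grundy k y2 -> y1 = y2)].

Lemma mainG k x : 0 < k -> Inv k x /\
  grundy k x = if k %| x then x %/ k else grundy k (x.-1 - x %/ k).
Proof.
move=> k0; elim: x => [|x [[bnd sur inj] _]].
  have e : grundy k 0 = 0 by rewrite grundyE div0n.
  rewrite /Inv dvdn0 !div0n !sub0n e; split=> //; split.
  - move=> y hy; have -> : y = 0 by lia. by rewrite e.
  - move=> v hv; have -> : v = 0 by lia.
    by exists 0; rewrite e.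
  - move=> y1 y2 h1 h2 _; lia.
have hd := leq_div x k.
have hS := divnS x k0.
set L' := x %/ k in bnd sur inj hd hS *.
case: (boolP (k %| x.+1)) => dv; [rewrite dv /= in hS | rewrite (negbTE dv) /= in hS].
-
  have gX : grundy k x.+1 = L'.+1.
    rewrite grundyE; apply mexP.
      apply/negP => /memM [y [hy e]].
      have := bnd y; rewrite e; lia.
    move=> w hw; apply/memM; have [y [hy e]] := sur w ltac:(lia).
    exists y; split=> //; lia.
  rewrite /Inv hS gX; split=> //; split.
  + move=> y hy; case: (ltnP y x.+1) => h.
      have := bnd y ltac:(lia); lia.
    have -> : y = x.+1 by lia.
    by rewrite gX.
  + move=> v hv; case: (ltnP v L'.+1) => h.
      have [y [hy e]] := sur v ltac:(lia); exists y; split=> //; lia.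
    exists x.+1; split; [lia | rewrite gX; lia].
  + move=> y1 y2 h1 h2 e.
    case: (ltnP y1 x.+1) => c1; case: (ltnP y2 x.+1) => c2.
    * apply: inj => //; lia.
    * have e2 : y2 = x.+1 by lia.
      move: e; rewrite e2 gX => e; have := bnd y1 ltac:(lia); lia.
    * have e1 : y1 = x.+1 by lia.
      move: e; rewrite e1 gX => e; have := bnd y2 ltac:(lia); lia.
    * lia.
-
  rewrite add0n in hS.
  set g := grundy k (x - L').
  have gX : grundy k x.+1 = g.
    rewrite grundyE; apply mexP.
      apply/negP => /memM [y [hy e]].
      have := inj y (x - L') ltac:(lia) ltac:(lia) e; lia.
    move=> w hw; apply/memM.
    have gb : g <= L' by apply: bnd; lia.
    have [y [hy e]] := sur w ltac:(lia).
    exists y; split=> //.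
    case: (eqVneq y (x - L')) => ey; last lia.
    by move: e; rewrite ey -/g => e; lia.
  rewrite /Inv hS gX /=; split=> //; split.
  + move=> y hy; case: (ltnP y x.+1) => h.
      apply: bnd; lia.
    have -> : y = x.+1 by lia.
    rewrite gX; apply: bnd; lia.
  + move=> v hv; have [y [hy e]] := sur v hv.
    case: (eqVneq y (x - L')) => ey.
      exists x.+1; split; [lia| by rewrite gX -e ey].
    exists y; split=> //; lia.
  + have key : forall y, x.+1 - L' <= y <= x -> grundy k y <> g.
      move=> y hy e; have := inj y (x - L') ltac:(lia) ltac:(lia) e; lia.
    move=> y1 y2 h1 h2 e.
    case: (ltnP y1 x.+1) => c1; case: (ltnP y2 x.+1) => c2.
    * apply: inj => //; lia.
    * have e2 : y2 = x.+1 by lia.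
      move: e; rewrite e2 gX => e; have := key y1 ltac:(lia); done.
    * have e1 : y1 = x.+1 by lia.
      move: e; rewrite e1 gX => e; have := key y2 ltac:(lia); by rewrite e.
    * lia.
Qed.

Lemma G_nk k n : 0 < k -> grundy k (n * k) = n.
Proof.
move=> k0; have [_ ->] := mainG k (n * k) k0.
by rewrite dvdn_mull // mulnK.
Qed.

Lemma G_R k n x : 0 < k -> n * k < x < n.+1 * k -> grundy k x = grundy k (x - n.+1).
Proof.
move=> k0 /andP[h1 h2]; have [_ ->] := mainG k x k0.
have ex : x = n * k + (x - n * k) by lia.
have hlt : x - n * k < k by rewrite mulSn in h2; lia.
have hd : x %/ k = n by rewrite ex divnMDl // divn_small // addn0.
have hm : ~~ (k %| x).
  apply/negP => /dvdnP [q eq].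
  have : q = n by move: hd; rewrite eq mulnK.
  move=> eq'; rewrite eq' in eq; lia.
rewrite (negbTE hm) hd; congr grundy; lia.
Qed.

Lemma G_red k n t r : 0 < k -> t * n.+1 + r < k ->
  grundy k (n * k + t * n.+1 + r) = grundy k (n * k + r).
Proof.
move=> k0; elim: t => [|t IH] h; first by rewrite mul0n addn0.
rewrite (@G_R k n) //; last by rewrite mulSn in h *; apply/andP; split; lia.
rewrite -IH; last by rewrite mulSn in h; lia.
congr grundy; rewrite mulSn; lia.
Qed.

Lemma keyG k n q c j : 1 < k -> c <= n -> j <= n -> k.-1 = q * n.+1 + c ->
  grundy k (n.+1 * k - 1 - j) =
  if j == c then n else grundy k (n * k - 1 - (if c < j then j - c - 1 else j + n - c)).
Proof.
move=> k1 hc hj hk.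
have k0 : 0 < k by lia.
have hN : n.+1 * k = n * k + k by rewrite mulSn addnC.
have h2 : n * 2 <= n * k by rewrite leq_mul2l; lia.
rewrite hN.
case: (leqP j c) => jc.
- have e : n * k + k - 1 - j = n * k + q * n.+1 + (c - j) by lia.
  rewrite e G_red //; last by lia.
  case: (eqVneq j c) => ejc.
    by rewrite ejc subnn addn0 G_nk.
  rewrite (@G_R k n) //; last by rewrite hN; apply/andP; split; lia.
  congr grundy; lia.
- rewrite (gtn_eqF jc).
  case: q hk => [|q] hk.
    congr grundy; lia.
  have e : n * k + k - 1 - j = n * k + q * n.+1 + (n.+1 + c - j).
    rewrite mulSn in hk; lia.
  rewrite e G_red //; last by rewrite mulSn in hk; lia.
  rewrite (@G_R k n) //; last by rewrite hN mulSn in hk *; apply/andP; split; lia.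
  congr grundy; lia.
Qed.

Definition J k (s : seq nat) := jos_run k (size s) s 0.

Lemma rot_split (s : seq nat) i : i < size s ->
  rot i s = nth 0 s i :: (drop i.+1 s ++ take i s).
Proof. by move=> hi; rewrite /rot (drop_nth 0 hi). Qed.

Lemma jos_step k n (s : seq nat) p : size s = n.+1 ->
  jos_run k n.+1 s p = nth 0 s ((p + k.-1) %% n.+1) ::
    jos_run k n (take ((p + k.-1) %% n.+1) s ++ drop ((p + k.-1) %% n.+1).+1 s) ((p + k.-1) %% n.+1).
Proof. by case: s => // a s0 hs; rewrite /= -hs. Qed.

Lemma jos_rot k n : forall s p, size s = n -> p <= n -> jos_run k n s p = J k (rot p s).
Proof.
elim: n => [|n IH] s p hs hp.
  by case: s hs => // _; rewrite /J.
rewrite /J size_rot hs !jos_step ?size_rot //.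
set i := (p + k.-1) %% n.+1.
set c := (0 + k.-1) %% n.+1.
have hi : i < n.+1 by rewrite ltn_pmod.
have hc : c < n.+1 by rewrite ltn_pmod.
rewrite !IH; first last.
- lia.
- rewrite size_cat size_takel ?size_drop ?hs; lia.
- lia.
- rewrite size_cat size_takel ?size_drop ?size_rot ?hs; lia.
have r1 : rot i (take i s ++ drop i.+1 s) = drop i.+1 s ++ take i s.
  have e : i = size (take i s) by rewrite size_take hs hi.
  by rewrite {1}e rot_size_cat.
have r2 : rot c (take c (rot p s) ++ drop c.+1 (rot p s)) = drop c.+1 (rot p s) ++ take c (rot p s).
  have e : c = size (take c (rot p s)) by rewrite size_take size_rot hs hc.
  by rewrite {1}e rot_size_cat.
rewrite r1 r2.
have key : rot c (rot p s) = rot i s.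
  rewrite rot_add_mod ?hs; try lia.
  have ei : i = (p + c) %% n.+1 by rewrite /i /c add0n modnDmr.
  case: ifP => h.
    case: (ltnP (c + p) n.+1) => h'.
      by rewrite ei modn_small addnC.
    have e : c + p = n.+1 by lia.
    rewrite e -hs rot_size ei addnC e modnn rot0 //.
  have e : p + c = (c + p - n.+1) + n.+1 by lia.
  rewrite ei e modnDr modn_small //; lia.
have := @rot_split s i; rewrite hs => /(_ hi) e1.
have := @rot_split (rot p s) c; rewrite size_rot hs => /(_ hc).
rewrite key e1 => -[-> ->] //.
Qed.

Lemma J_step k n (s : seq nat) : size s = n.+1 ->
  J k s = nth 0 s (k.-1 %% n.+1) :: J k (drop (k.-1 %% n.+1).+1 s ++ take (k.-1 %% n.+1) s).
Proof.
move=> hs; set c := k.-1 %% n.+1.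
have hc : c < n.+1 by rewrite ltn_pmod.
rewrite {1}/J hs jos_step // add0n -/c jos_rot; first last.
- lia.
- rewrite size_cat size_takel ?size_drop ?hs; lia.
have e : c = size (take c s) by rewrite size_takel ?hs; lia.
congr (_ :: J k _); by rewrite {1}e rot_size_cat.
Qed.

Lemma nth_rest (s : seq nat) n c j : size s = n.+1 -> c <= n -> j <= n -> j != c ->
  nth 0 s j = nth 0 (drop c.+1 s ++ take c s) (if c < j then j - c - 1 else j + n - c).
Proof.
move=> hs hc hj hjc; rewrite nth_cat size_drop hs.
case: (ltnP c j) => h.
  have -> : j - c - 1 < n.+1 - c.+1 by lia.
  rewrite nth_drop; congr nth; lia.
have -> : (j + n - c < n.+1 - c.+1) = false by lia.
rewrite nth_take; last by lia.
congr nth; lia.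
Qed.

Lemma claim k n : 1 < k -> forall s, uniq s -> size s = n -> forall j, j < n ->
  n - 1 - index (nth 0 s j) (J k s) = grundy k (n * k - 1 - j).
Proof.
move=> k1; elim: n => [//|n IH] s us hs j hj.
have := divn_eq k.-1 n.+1; set c := k.-1 %% n.+1; set q := k.-1 %/ n.+1 => hk.
have hc : c < n.+1 by rewrite ltn_pmod.
rewrite (@keyG k n q c j) //; try lia.
rewrite (@J_step k n s hs) -/c /=.
have hsc : size s = n.+1 by [].
case: (eqVneq j c) => ejc.
  by rewrite ejc eqxx /= subn1 subn0.
have -> : (nth 0 s c == nth 0 s j) = false.
  apply/negbTE; rewrite nth_uniq ?hs //; try lia.
set s' := drop c.+1 s ++ take c s.
have us' : uniq s'.
  by move: us; rewrite -(rot_uniq c) rot_split ?hs // => /andP[].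
have hs' : size s' = n by rewrite size_cat size_takel ?size_drop ?hs; lia.
rewrite (@nth_rest s n c j hs) //; try lia.
rewrite -(IH s' us' hs'); last by case: ifP; lia.
rewrite -/s'; lia.
Qed.

Theorem theorem2 (k n m : nat) :
  2 <= k -> 1 <= m <= n -> n - jos_o k n m = grundy k (n * k - m).
Proof.
move=> k2 /andP[m1 mn].
have hm : m = nth 0 (iota 1 n) m.-1 by rewrite nth_iota; lia.
have := @claim k n k2 (iota 1 n) (iota_uniq 1 n) (size_iota 1 n) m.-1 ltac:(lia).
rewrite -hm /jos_o /jos_order /J size_iota.
have -> : n * k - 1 - m.-1 = n * k - m by lia.
move=> <-; lia.
Qed.
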